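(* Let $n\ge2$. The semigroup $(S_n,\cdot)$ does not satisfy the identity $v_n=v_n'$, where $v_n:=\bigl(x_1x_2\cdots x_{2n}\cdot x_nx_{n-1}\cdots x_1\cdot x_{n+1}x_{n+2}\cdots x_{2n}\bigr)\cdot x_1x_2\cdots x_n$ and $v_n':=\bigl(x_1x_2\cdots x_{2n}\cdot x_nx_{n-1}\cdots x_1\cdot x_{n+1}x_{n+2}\cdots x_{2n}\bigr)^2\cdot x_1x_2\cdots x_n$.
   Context: For $n\ge2$, $S_n$ is the semigroup of partial one-to-one transformations of $\{0,1,\dots,3n+2\}$ (acting on the right, composition $x(\alpha\beta)=(x\alpha)\beta$) that is the inverse semigroup (closed under composition and taking inverse partial maps) generated by $\chi:\ n\mapsto 2n+1,\ n+1\mapsto 2n+2$ and, for $i=1,\dots,n$, $\chi_i:\ i-1\mapsto i,\ n+1+i\mapsto n+i,\ 2n+1+i\mapsto 2n+2+i$ (each undefined elsewhere). *)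

(* Defs.v *)
From mathcomp Require Import all_boot.
Set Implicit Arguments. Unset Strict Implicit. Unset Printing Implicit Defensive.

Definition base (n : nat) := 'I_(3 * n + 2).+1.

Definition ptrans (n : nat) := {ffun base n -> option (base n)}.

(* Composition acting on the right: x (a b) = (x a) b. *)
Definition pcomp n (a b : ptrans n) : ptrans n := [ffun x => obind b (a x)].

(* Inverse partial map (for one-to-one partial maps this is the usual inverse). *)
Definition pinv n (a : ptrans n) : ptrans n := [ffun y => [pick x | a x == Some y]].

(* Identity map, only used as the neutral start of word evaluation. *)
Definition pid n : ptrans n := [ffun x => Some x].

Definition mkmap n (s : seq (nat * nat)) : ptrans n :=
  [ffun x : base n => omap (fun y => inord y : base n)
                       (ohead [seq p.2 | p <- s & p.1 == val x])].

Definition chi n : ptrans n := mkmap n [:: (n, 2 * n + 1); (n + 1, 2 * n + 2)].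

Definition chi_i n (i : nat) : ptrans n :=
  mkmap n [:: (i - 1, i); (n + 1 + i, n + i); (2 * n + 1 + i, 2 * n + 2 + i)].

Inductive inS (n : nat) : ptrans n -> Prop :=
  | inS_chi : inS (chi n)
  | inS_chi_i : forall i, 1 <= i <= n -> inS (chi_i n i)
  | inS_comp : forall a b, inS a -> inS b -> inS (pcomp a b)
  | inS_inv : forall a, inS a -> inS (pinv a).

Definition evalw n (x : nat -> ptrans n) (w : seq nat) : ptrans n :=
  foldl (fun acc i => pcomp acc (x i)) (pid n) w.

Definition u_word (n : nat) : seq nat :=
  iota 1 (2 * n) ++ rev (iota 1 n) ++ iota (n + 1) n.

Definition v_word (n : nat) : seq nat := u_word n ++ iota 1 n.
Definition v'_word (n : nat) : seq nat := u_word n ++ u_word n ++ iota 1 n.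

(* Main.v *)
Require Import Defs.
From mathcomp Require Import all_boot zify.

Lemma evalw_pt n (x : nat -> ptrans n) w p :
  evalw x w p = foldl (fun o i => obind (x i) o) (Some p) w.
Proof.
rewrite /evalw.
suff H : forall a : ptrans n, foldl (fun (acc : ptrans n) i => Defs.pcomp acc (x i)) a w p
   = foldl (fun o i => obind (x i) o) (a p) w by rewrite H ffunE.
elim: w => [|i w IH] a //=. by rewrite IH ffunE.
Qed.

Lemma foldl_None n (x : nat -> ptrans n) w :
  foldl (fun o i => obind (x i) o) None w = None.
Proof. by elim: w. Qed.

Lemma chii_a n i : 1 <= i <= n -> chi_i n i (inord (i-1)) = Some (inord i).
Proof. move=> Hi. rewrite /chi_i /mkmap ffunE /= inordK; last lia. by rewrite /= eqxx. Qed.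

Lemma chii_b n i : 1 <= i <= n -> chi_i n i (inord (n+1+i)) = Some (inord (n+i)).
Proof. move=> Hi. rewrite /chi_i /mkmap ffunE /= inordK; last lia.
rewrite /= (_ : (i-1 == n+1+i) = false); last (apply/eqP; lia). by rewrite eqxx. Qed.

Lemma chii_c n i : 1 <= i <= n -> chi_i n i (inord (2*n+1+i)) = Some (inord (2*n+2+i)).
Proof. move=> Hi. rewrite /chi_i /mkmap ffunE /= inordK; last lia.
rewrite /= (_ : (i-1 == 2*n+1+i) = false); last (apply/eqP; lia).
rewrite (_ : (n+1+i == 2*n+1+i) = false); last (apply/eqP; lia). by rewrite eqxx. Qed.

Lemma chi_a n : chi n (inord n) = Some (inord (2*n+1)).
Proof. rewrite /chi /mkmap ffunE /= inordK; last lia. by rewrite /= eqxx. Qed.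

Lemma chi_b n : chi n (inord (n+1)) = Some (inord (2*n+2)).
Proof. rewrite /chi /mkmap ffunE /= inordK; last lia.
rewrite /= (_ : (n == n+1) = false); last (apply/eqP; lia). by rewrite eqxx. Qed.

Lemma chi_c n : 1 <= n -> chi n (inord (3*n+2)) = None.
Proof. move=> Hn. rewrite /chi /mkmap ffunE /= inordK; last lia.
rewrite /= (_ : (n == 3*n+2) = false); last (apply/eqP; lia).
rewrite (_ : (n+1 == 3*n+2) = false) //; apply/eqP; lia. Qed.

Lemma idem_pt n (a : ptrans n) y z : a z = Some y -> Defs.pcomp (pinv a) a y = Some y.
Proof.
move=> Hz. rewrite /Defs.pcomp /pinv !ffunE. case: pickP => [w /eqP Hw | H] /=; first by [].
by move: (H z); rewrite Hz eqxx.
Qed.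

Definition X n (i : nat) : ptrans n :=
  if i <= n then chi_i n i else if i == n.+1 then chi n
  else Defs.pcomp (pinv (chi n)) (chi n).

Notation step n := (fun o i => obind (X n i) o).

Lemma fwd n s m : (s = 0 \/ s = 2*n+2) -> m <= n ->
  foldl (step n) (Some (inord s)) (iota 1 m) = Some (inord (s+m)).
Proof.
move=> Hs. elim: m => [|m IH] Hm; first by rewrite addn0.
rewrite (_ : iota 1 m.+1 = iota 1 m ++ [:: 1+m]); last by rewrite -[m.+1]addn1 iotaD addnC.
rewrite foldl_cat IH; last lia.
rewrite /= /X (_ : 1 + m <= n); last lia.
case: Hs => Hs; subst s.
- rewrite (_ : 0 + m = (1+m) - 1); last lia. rewrite chii_a; last lia. do 2 f_equal; lia.
- rewrite (_ : 2*n+2 + m = 2*n+1+(1+m)); last lia. rewrite chii_c; last lia. do 2 f_equal; lia.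
Qed.

Lemma bwd n m : m <= n ->
  foldl (step n) (Some (inord (n+1+m))) (rev (iota 1 m)) = Some (inord (n+1)).
Proof.
elim: m => [|m IH] Hm; first by rewrite addn0.
rewrite (_ : iota 1 m.+1 = iota 1 m ++ [:: 1+m]); last by rewrite -[m.+1]addn1 iotaD addnC.
rewrite rev_cat /= /X (_ : 1 + m <= n); last lia.
rewrite (_ : n+1+m.+1 = n+1+(1+m)); last lia. rewrite chii_b; last lia.
rewrite -IH; last lia. do 3 f_equal; lia.
Qed.

Lemma mid_e n p m k : (exists z, chi n z = Some p) -> n.+2 <= k ->
  foldl (step n) (Some p) (iota k m) = Some p.
Proof.
move=> [z Hz]. elim: m k => [|m IH] k Hk //=.
rewrite /X ifF; last (apply/negbTE; rewrite -ltnNge; lia).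
rewrite ifF; last (apply/eqP; lia).
rewrite (@idem_pt _ _ _ _ Hz) IH //. lia.
Qed.

Lemma mid n p q : 1 <= n -> chi n p = Some q ->
  foldl (step n) (Some p) (iota (n+1) n) = Some q.
Proof.
move=> Hn Hp.
have -> : iota (n+1) n = (n+1) :: iota (n+1+1) (n-1).
  rewrite [X in iota _ X](_ : n = 1 + (n-1)); last lia. by rewrite iotaD.
have HX : X n (n+1) = chi n.
  rewrite /X ifF; last (apply/negbTE; rewrite -ltnNge; lia).
  rewrite ifT //; apply/eqP; lia.
rewrite /= HX Hp /=. apply: mid_e; last lia. by exists p.
Qed.

Lemma mid_none n p : 1 <= n -> chi n p = None ->
  foldl (step n) (Some p) (iota (n+1) n) = None.
Proof.
move=> Hn Hp.
have -> : iota (n+1) n = (n+1) :: iota (n+1+1) (n-1).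
  rewrite [X in iota _ X](_ : n = 1 + (n-1)); last lia. by rewrite iotaD.
have HX : X n (n+1) = chi n.
  rewrite /X ifF; last (apply/negbTE; rewrite -ltnNge; lia).
  rewrite ifT //; apply/eqP; lia.
by rewrite /= HX Hp /= foldl_None.
Qed.

Theorem proposition5p3 (n : nat) (hn : 2 <= n) :
  ~ (forall x : nat -> ptrans n,
       (forall i, 1 <= i <= 2 * n -> @inS n (x i)) ->
       @evalw n x (v_word n) = @evalw n x (v'_word n)).
Proof.
move=> H.
have Hx : forall i, 1 <= i <= 2 * n -> inS (X n i).
  move=> i Hi; rewrite /X; case: ifP => Hin.
    by apply: inS_chi_i; lia.
  case: ifP => _; first exact: inS_chi.
  apply: inS_comp; [apply: inS_inv|]; exact: inS_chi.
have := congr1 (fun f : ptrans n => f (inord 0)) (H (X n) Hx).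
rewrite /= !evalw_pt /v_word /v'_word /u_word.
have -> : iota 1 (2 * n) = iota 1 n ++ iota (n+1) n.
  by rewrite (_ : 2 * n = n + n); [rewrite iotaD add1n addn1 | lia].
rewrite !foldl_cat fwd; [|by left|lia].
rewrite add0n (@mid n _ (inord (2*n+1))); [|lia|exact: chi_a].
rewrite (_ : 2*n+1 = n+1+n); last lia.
rewrite bwd // (@mid n _ (inord (2*n+2))); [|lia|exact: chi_b].
rewrite fwd; [|by right|lia].
rewrite (_ : 2*n+2+n = 3*n+2); last lia.
rewrite mid_none; [|lia|apply: chi_c; lia].
by rewrite !foldl_None.
Qed.
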